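(* Let $\mathbf p,\mathbf q_1,\mathbf q_2,\mathbf r$ be words, $x$ a letter, and $\mathbf w=\mathbf px\mathbf q_1\mathbf q_2x\mathbf r$. If every letter occurring in $\mathbf q_1\mathbf q_2$ occurs at least twice in $\mathbf w$, then $\mathbf D_{15}$ satisfies the identity $\mathbf w\approx\mathbf px\mathbf q_1x\mathbf q_2x\mathbf r$.
   Context: Words are elements of the free monoid over a countably infinite alphabet; distinct symbols below are distinct letters. $\prod$ denotes concatenation in increasing index order; $\operatorname{var}\Sigma$ is the monoid variety defined by identities $\Sigma$. $S_N$ is the symmetric group on $\{1,\dots,N\}$, $i\tau$ the image of $i$. For $n,m,k\in\mathbb N$, $\tau\in S_{n+m+k}$: $\mathbf c_{n,m,k}[\tau]=\bigl(\prod_{i=1}^n z_it_i\bigr)xyt\bigl(\prod_{i=n+1}^{n+m} z_it_i\bigr)x\bigl(\prod_{i=1}^{n+m+k-1} z_{i\tau}y_i^2\bigr)z_{(n+m+k)\tau}y\bigl(\prod_{i=n+m+1}^{n+m+k} t_iz_i\bigr)$; $\mathbf c'_{n,m,k}[\tau]$ is obtained by swapping the first occurrences of $x$ and $y$; $\mathbf d_{n,m,k}[\tau]$, $\mathbf d'_{n,m,k}[\tau]$ are $\mathbf c_{n,m,k}[\tau]$, $\mathbf c'_{n,m,k}[\tau]$ read right to left. $\Phi_1$ is the set of all identities $\mathbf c_{n,m,k}[\tau]\approx\mathbf c'_{n,m,k}[\tau]$, $\mathbf d_{n,m,k}[\tau]\approx\mathbf d'_{n,m,k}[\tau]$. $\mathbf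 D_{15}=\operatorname{var}\{\Phi_1,\ xyx\approx x^2yx,\ xyx\approx xyx^2,\ (xy)^2\approx(yx)^2\}$. *)

(* Defs.v *)
From mathcomp Require Import all_boot all_fingroup.
Set Implicit Arguments. Unset Strict Implicit. Unset Printing Implicit Defensive.

Definition word := seq nat.

Record monoid := Monoid {
  mcar :> Type;
  mop : mcar -> mcar -> mcar;
  munit : mcar;
  mopA : forall a b c, mop a (mop b c) = mop (mop a b) c;
  mop1l : forall a, mop munit a = a;
  mop1r : forall a, mop a munit = a }.

Definition weval (M : monoid) (f : nat -> M) (w : word) : M :=
  foldr (fun a acc => mop (f a) acc) (munit M) w.

Definition msat (M : monoid) (u v : word) : Prop :=
  forall f : nat -> M, weval f u = weval f v.

Definition identities := word -> word -> Prop.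

Definition in_var (S : identities) (M : monoid) : Prop :=
  forall u v, S u v -> msat M u v.

Definition var_sat (S : identities) (u v : word) : Prop :=
  forall M : monoid, in_var S M -> msat M u v.

(* Letter encoding: x = 0, y = 1, t = 2, z_i = 3i+3, t_i = 3i+4, y_i = 3i+5. *)
Definition lx := 0. Definition ly := 1. Definition lt := 2.
Definition lz (i : nat) := 3 * i + 3.
Definition ltt (i : nat) := 3 * i + 4.
Definition lyy (i : nat) := 3 * i + 5.

(* i tau, for i in {1..N}, with tau a permutation of 'I_N representing
   a permutation of {1..N} (via the shift i <-> i-1). *)
Definition papp (N : nat) (tau : {perm 'I_N}) (i : nat) : nat :=
  if @insub nat (fun j => j < N) 'I_N i.-1 is Some j then (val (tau j)).+1 else 0.

Definition cword (n m k : nat) (tau : {perm 'I_(n + m + k)}) : word :=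
  let N := n + m + k in
  flatten [seq [:: lz i; ltt i] | i <- iota 1 n]
  ++ [:: lx; ly; lt]
  ++ flatten [seq [:: lz i; ltt i] | i <- iota n.+1 m]
  ++ [:: lx]
  ++ flatten [seq [:: lz (papp tau i); lyy i; lyy i] | i <- iota 1 N.-1]
  ++ [:: lz (papp tau N); ly]
  ++ flatten [seq [:: ltt i; lz i] | i <- iota (n + m).+1 k].

(* c' : the first occurrences of x and y swapped. *)
Definition cword' (n m k : nat) (tau : {perm 'I_(n + m + k)}) : word :=
  let N := n + m + k in
  flatten [seq [:: lz i; ltt i] | i <- iota 1 n]
  ++ [:: ly; lx; lt]
  ++ flatten [seq [:: lz i; ltt i] | i <- iota n.+1 m]
  ++ [:: lx]
  ++ flatten [seq [:: lz (papp tau i); lyy i; lyy i] | i <- iota 1 N.-1]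
  ++ [:: lz (papp tau N); ly]
  ++ flatten [seq [:: ltt i; lz i] | i <- iota (n + m).+1 k].

(* Phi_1 (we require n+m+k >= 1 so that z_{(n+m+k)tau} makes sense). *)
Definition Phi1 : identities := fun u v =>
  exists (n m k : nat) (tau : {perm 'I_(n + m + k)}), 0 < n + m + k /\
    ((u = cword tau /\ v = cword' tau) \/
     (u = rev (cword tau) /\ v = rev (cword' tau))).

Definition D15_ids : identities := fun u v =>
  Phi1 u v
  \/ (u = [:: lx; ly; lx] /\ v = [:: lx; lx; ly; lx])
  \/ (u = [:: lx; ly; lx] /\ v = [:: lx; ly; lx; lx])
  \/ (u = [:: lx; ly; lx; ly] /\ v = [:: ly; lx; ly; lx]).

(* Main.v *)
Require Import Defs.
From mathcomp Require Import all_boot all_fingroup zify.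
Set Implicit Arguments. Unset Strict Implicit.
Set Warnings "-notation-overridden".
Section S.
Variable M : monoid.
Definition ev (s : seq M) : M := foldr (@mop M) (munit M) s.
Definition fF (X Y : M) (us : seq M) (n : nat) : M :=
  if n == 0 then X else if n == 1 then Y
  else if (n %% 3 == 2) && (5 <= n) then nth (munit M) (munit M :: us) ((n - 5) %/ 3)
  else munit M.
Lemma fF_lz X Y us i : fF X Y us (lz i) = munit M.
Proof.
rewrite /fF /lz.
have -> : (3 * i + 3 == 0) = false by apply/eqP; lia.
have -> : (3 * i + 3 == 1) = false by apply/eqP; lia.
have -> : ((3 * i + 3) %% 3 == 2) = false by apply/eqP; lia.
by [].
Qed.
Lemma fF_ltt X Y us i : fF X Y us (ltt i) = munit M.
Proof.
rewrite /fF /ltt.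
have -> : (3 * i + 4 == 0) = false by apply/eqP; lia.
have -> : (3 * i + 4 == 1) = false by apply/eqP; lia.
have -> : ((3 * i + 4) %% 3 == 2) = false by apply/eqP; lia.
by [].
Qed.
Lemma fF_lyy X Y us i : fF X Y us (lyy i) = nth (munit M) (munit M :: us) i.
Proof.
rewrite /fF /lyy.
have -> : (3 * i + 5 == 0) = false by apply/eqP; lia.
have -> : (3 * i + 5 == 1) = false by apply/eqP; lia.
have -> : ((3 * i + 5) %% 3 == 2) by apply/eqP; lia.
have -> : (5 <= 3 * i + 5) by lia.
have -> : (3 * i + 5 - 5) %/ 3 = i by lia.
by [].
Qed.
Lemma ev_cat s t : ev (s ++ t) = mop (ev s) (ev t).
Proof. elim: s => [|a s IH] /=; first by rewrite mop1l. by rewrite IH mopA. Qed.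
Lemma weval_cat (f : nat -> M) s t : weval f (s ++ t) = mop (weval f s) (weval f t).
Proof. elim: s => [|a s IH] /=; first by rewrite mop1l. by rewrite IH mopA. Qed.
Definition dbl (l : seq M) := flatten [seq [:: u; u] | u <- l].
Lemma wev_mid X Y us g s n :
  weval (fF X Y us) (flatten [seq [:: lz (g i); lyy i; lyy i] | i <- iota s n])
  = ev (dbl [seq nth (munit M) (munit M :: us) i | i <- iota s n]).
Proof.
elim: n s => [|n IH] s //=.
rewrite -IH fF_lz fF_lyy mop1l.
by rewrite -/(weval (fF X Y us) _).
Qed.
Lemma wev_end X Y us s n :
  weval (fF X Y us) (flatten [seq [:: ltt i; lz i] | i <- iota s n]) = munit M.
Proof.
elim: n s => [|n IH] s //=.
by rewrite -/(weval (fF X Y us) _) IH fF_lz fF_ltt !mop1l.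
Qed.
Lemma nth_iotaS (us : seq M) s n :
  [seq nth (munit M) (munit M :: us) i | i <- iota s.+1 n] = [seq nth (munit M) us i | i <- iota s n].
Proof. by elim: n s => [|n IH] s //=; rewrite IH. Qed.
Lemma nth_iota1 us : [seq nth (munit M) (munit M :: us) i | i <- iota 1 (size us)] = us.
Proof. by rewrite nth_iotaS; exact: mkseq_nth. Qed.
Hypothesis HM : in_var D15_ids M.
Lemma fF_lx X Y us : fF X Y us lx = X. Proof. by []. Qed.
Lemma fF_ly X Y us : fF X Y us ly = Y. Proof. by []. Qed.
Lemma fF_lt X Y us : fF X Y us lt = munit M. Proof. by []. Qed.
Lemma Fg x y us : ev ([:: y; x; x] ++ dbl us ++ [:: y]) = ev ([:: x; y; x] ++ dbl us ++ [:: y]).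
Proof.
pose tau : {perm 'I_(0+0+(size us).+1)} := 1%g.
have P : D15_ids (@cword 0 0 (size us).+1 tau) (@cword' 0 0 (size us).+1 tau).
  by left; exists 0, 0, (size us).+1, tau; split => //; left.
have H := HM P (fF x y us).
rewrite /cword /cword' in H; move: H; set g := papp _ => H; clearbody g; rewrite !add0n /= in H.
rewrite !weval_cat /= wev_mid nth_iota1 /= !fF_lz !fF_ltt wev_end !fF_lx !fF_ly !fF_lt in H.
rewrite !mop1l !mop1r in H.
by rewrite !ev_cat /= !mop1r -!mopA H.
Qed.
Lemma Rr x y : ev [:: y; x; y; x] = ev [:: y; x; x; y].
Proof.
pose tau : {perm 'I_(0+0+1)} := 1%g.
have P : D15_ids (rev (@cword 0 0 1 tau)) (rev (@cword' 0 0 1 tau)).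
  by left; exists 0, 0, 1, tau; split => //; right.
have H := HM P (fF x y [::]).
rewrite /cword /cword' in H; move: H; set g := papp _ => H; clearbody g; rewrite !add0n /= in H.
rewrite /rev /= !fF_lz fF_ltt fF_lx fF_ly fF_lt !mop1l in H.
exact: H.
Qed.
Lemma A1 a b : ev [:: a; b; a] = ev [:: a; a; b; a].
Proof.
have P : D15_ids [:: lx; ly; lx] [:: lx; lx; ly; lx] by right; left.
exact: (HM P (fF a b [::])).
Qed.
Lemma A2 a b : ev [:: a; b; a] = ev [:: a; b; a; a].
Proof.
have P : D15_ids [:: lx; ly; lx] [:: lx; ly; lx; lx] by right; right; left.
exact: (HM P (fF a b [::])).
Qed.
Lemma ev_ctx l s s' r : ev s = ev s' -> ev (l ++ s ++ r) = ev (l ++ s' ++ r).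
Proof. by rewrite !ev_cat => ->. Qed.
Lemma ev1 a : ev [:: a] = a. Proof. by rewrite /= mop1r. Qed.
Lemma ev_flat l B r : ev (l ++ ev B :: r) = ev (l ++ B ++ r).
Proof. by rewrite -cat1s !ev_cat ev1. Qed.
Lemma A1e a B : ev (a :: B ++ [:: a]) = ev (a :: a :: B ++ [:: a]).
Proof.
transitivity (ev [:: a; ev B; a]); first exact: (esym (ev_flat [:: a] B [:: a])).
transitivity (ev [:: a; a; ev B; a]); first exact: A1.
exact: (ev_flat [:: a; a] B [:: a]).
Qed.
Lemma A2e a B : ev (a :: B ++ [:: a]) = ev (a :: B ++ [:: a; a]).
Proof.
transitivity (ev [:: a; ev B; a]); first exact: (esym (ev_flat [:: a] B [:: a])).
transitivity (ev [:: a; ev B; a; a]); first exact: A2.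
exact: (ev_flat [:: a] B [:: a; a]).
Qed.
Lemma Sx x a us : ev (x :: a :: a :: dbl us ++ [:: x]) = ev (x :: a :: a :: x :: dbl us ++ [:: x]).
Proof.
transitivity (ev (x :: x :: a :: a :: dbl us ++ [:: x])); first exact: (A1e x (a :: a :: dbl us)).
transitivity (ev ([:: x] ++ ([:: a; x; a] ++ dbl us ++ [:: x]) ++ [::])).
  have h := ev_ctx [:: x] [::] (Fg a x us). rewrite !cats0 in h. rewrite !cats0. exact h.
rewrite cats0. exact: (ev_ctx [::] (dbl us ++ [:: x]) (Rr a x)).
Qed.
Lemma dbl_cat s t : dbl (s ++ t) = dbl s ++ dbl t.
Proof. by rewrite /dbl map_cat flatten_cat. Qed.
Lemma dbl_cons a s : dbl (a :: s) = a :: a :: dbl s. Proof. by []. Qed.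
Lemma Sp x us1 us2 : ev (x :: dbl us1 ++ dbl us2 ++ [:: x]) = ev (x :: dbl us1 ++ x :: dbl us2 ++ [:: x]).
Proof.
elim: us1 => [|a us1 IH]; first exact: A1e.
rewrite dbl_cons !cat_cons.
transitivity (ev (x :: a :: a :: x :: dbl us1 ++ dbl us2 ++ [:: x])).
  have h := Sx x a (us1 ++ us2). rewrite dbl_cat -!catA in h. exact h.
transitivity (ev ([:: x; a; a] ++ (x :: dbl us1 ++ x :: dbl us2 ++ [:: x]) ++ [::])).
  have h := ev_ctx [:: x; a; a] [::] IH. rewrite !cats0 in h. rewrite cats0. exact h.
have h := ev_ctx [::] (dbl us2 ++ [:: x]) (Sx x a us1).
rewrite !cat0s !cat_cons -!catA in h. rewrite cats0. by rewrite h.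
Qed.
Variable f : nat -> M.
Lemma weval_ev w : weval f w = ev (map f w).
Proof. by elim: w => //= a w ->. Qed.
Definition dblw (q : word) : word := flatten [seq [:: a; a] | a <- q].
Lemma map_dblw q : map f (dblw q) = dbl (map f q).
Proof. by elim: q => //= a q IH; rewrite dbl_cons -IH. Qed.
Lemma count_dblw a q : count_mem a (dblw q) = 2 * count_mem a q.
Proof. elim: q => //= b q IH. rewrite IH. lia. Qed.
Lemma sq_one L a R : a \in L ++ R -> ev (map f (L ++ a :: R)) = ev (map f (L ++ a :: a :: R)).
Proof.
rewrite mem_cat => /orP [] /splitPr [L1 L2].
- have h := ev_ctx (map f L1) (map f R) (A2e (f a) (map f L2)).
  rewrite !map_cat /= ?cat_cons -?catA ?cat_cons. rewrite ?cat_cons -?catA ?cat_cons in h. exact h.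
- have h := ev_ctx (map f L) (map f L2) (A1e (f a) (map f L1)).
  rewrite !map_cat /= !map_cat /= ?cat_cons -?catA ?cat_cons. rewrite ?cat_cons -?catA ?cat_cons in h. exact h.
Qed.
Lemma sq_all q L R : (forall a, a \in q -> 1 < count_mem a (L ++ q ++ R)) ->
  ev (map f (L ++ q ++ R)) = ev (map f (L ++ dblw q ++ R)).
Proof.
elim: q L => [|a q IH] L H //=.
have ha : a \in L ++ q ++ R.
  have := H a (mem_head _ _). rewrite !count_cat /= eqxx.
  apply: contraLR => /count_memPn. rewrite !count_cat. move=> /= ?; lia.
rewrite (sq_one ha).
have := IH (L ++ [:: a; a]).
rewrite -!catA /= => ->; first by [].
move=> b hb. have := H b; rewrite inE hb orbT => /(_ isT).
rewrite !count_cat /=. rewrite ?count_cat; case: (a == b) => /=; lia.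
Qed.
End S.
Ltac cnt := rewrite ?count_cat /= ?count_cat /= ?count_cat ?count_dblw /=; move: (nat_of_bool _) => e; lia.
Theorem lemma6p3 (p q1 q2 r : word) (x : nat) :
  (forall a, a \in q1 ++ q2 ->
     1 < count_mem a (p ++ x :: q1 ++ q2 ++ x :: r)) ->
  var_sat D15_ids (p ++ x :: q1 ++ q2 ++ x :: r)
                  (p ++ x :: q1 ++ x :: q2 ++ x :: r).
Proof.
move=> H M HM f. rewrite !weval_ev.
transitivity (ev (map f ((p ++ [:: x]) ++ dblw (q1 ++ q2) ++ x :: r))).
  rewrite -(sq_all HM f); first by rewrite -!catA.
  move=> a ha; have := H a ha. cnt.
transitivity (ev (map f p ++ (f x :: dbl (map f q1) ++ f x :: dbl (map f q2) ++ [:: f x]) ++ map f r)).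
  have h := ev_ctx (map f p) (map f r) (Sp HM (f x) (map f q1) (map f q2)).
  rewrite -h; congr ev. rewrite !map_cat map_dblw map_cat dbl_cat /= -!catA /=.
  by [].
transitivity (ev (map f ((p ++ x :: dblw q1 ++ [:: x]) ++ dblw q2 ++ x :: r))).
  congr ev; rewrite !map_cat /= ?map_cat ?map_dblw /= -!catA /= ?map_cat ?map_dblw ?cat_cons -?catA /= ?cat_cons. by [].
rewrite -(sq_all HM f); last first.
  move=> a ha; have := H a; rewrite mem_cat ha orbT => /(_ isT).
  cnt.
transitivity (ev (map f ((p ++ [:: x]) ++ dblw q1 ++ x :: q2 ++ x :: r))).
  by rewrite -!catA /= ?cat_cons -?catA.
rewrite -(sq_all HM f); first by rewrite -!catA.
move=> a ha; have := H a; rewrite mem_cat ha /= => /(_ isT).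
cnt.
Qed.
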